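(* Let $q_1=(\mathbf A_1,\mathbf b_1),q_2=(\mathbf A_2,\mathbf b_2)\in Q$ be distinct points such that the line $q_1q_2$ is horizontal. Then the projected pair of 2-gons, with vertices $A_1=[\mathbf A_1],A_2=[\mathbf A_2]$ and edges $b_1=[\mathbf b_1],b_2=[\mathbf b_2]$, is inscribed, i.e., the point $b_1\cap b_2$ lies on the line $A_1A_2$. Conversely, every inscribed pair of 2-gons (points $A_1\neq A_2$, lines $b_1\neq b_2$ with $b_1\cap b_2\in A_1A_2$) with $A_i\notin b_i$ for $i=1,2$ lifts to a unique horizontal 2-gon in $Q$, i.e., there are unique $(\mathbf A_i,\mathbf b_i)\in Q$ with $[\mathbf A_i]=A_i$, $[\mathbf b_i]=b_i$ and the line through them horizontal.
   Context: $Q:=\{(\mathbf A,\mathbf b)\in\mathbb R^3\times(\mathbb R^3)^*:\mathbf b\mathbf A=1\}$ ($\mathbf A$ column, $\mathbf b$ row). For $\mathbf A,\mathbf A'\in\mathbb R^3$, $\mathbf A\times\mathbf A':=\det(\mathbf A,\mathbf A',\cdot)\in(\mathbb R^3)^*$. The distribution $\mathscr D$ on $Q$ at $(\mathbf A,\mathbf b)$ consists of vectors $(\dot{\mathbf A},\dot{\mathbf b})$ with $\dot{\mathbf b}\mathbf A+\mathbf b\dot{\mathbf A}=0$ and $\dot{\mathbf b}=\mathbf A\times\dot{\mathbf A}$. A line is horizontal if it is an affine line contained in $Q$ and everywhere tangent to $\mathscr D$. $[\mathbf A]\in\mathbb{RP}^2$ is the point with homogeneous coordinates $\mathbf A$;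 $[\mathbf b]$ is the line $\{X:\mathbf bX=0\}$. *)

(* Defs.v *)
From mathcomp Require Import all_boot all_order all_algebra.
From mathcomp Require Import reals.
Set Implicit Arguments. Unset Strict Implicit. Unset Printing Implicit Defensive.
Import Order.TTheory GRing.Theory Num.Theory.
Local Open Scope ring_scope.

Section Defs.
Variable R : realType.

(* column vectors A in R^3, row vectors b in (R^3)^* *)
Definition pairing (b : 'rV[R]_3) (A : 'cV[R]_3) : R := (b *m A) ord0 ord0.

Definition det3 (u v w : 'cV[R]_3) : R :=
  \det (\matrix_(i < 3, j < 3)
          (if j == 0 :> nat then u i ord0
           else if j == 1 :> nat then v i ord0 else w i ord0)).

Definition evec (j : 'I_3) : 'cV[R]_3 := \col_(i < 3) (i == j)%:R.

Definition cross (u v : 'cV[R]_3) : 'rV[R]_3 := \row_(j < 3) det3 u v (evec j).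

Definition inQ (A : 'cV[R]_3) (b : 'rV[R]_3) : Prop := pairing b A = 1.

Definition inD (A : 'cV[R]_3) (b : 'rV[R]_3) (dA : 'cV[R]_3) (db : 'rV[R]_3) : Prop :=
  pairing db A + pairing b dA = 0 /\ db = cross A dA.

(* the affine line through (A1,b1), (A2,b2) is contained in Q and
   everywhere tangent to D (its direction vector lies in D at each point) *)
Definition horizontal_line (A1 : 'cV[R]_3) (b1 : 'rV[R]_3)
    (A2 : 'cV[R]_3) (b2 : 'rV[R]_3) : Prop :=
  forall t : R,
    inQ (A1 + t *: (A2 - A1)) (b1 + t *: (b2 - b1)) /\
    inD (A1 + t *: (A2 - A1)) (b1 + t *: (b2 - b1)) (A2 - A1) (b2 - b1).

(* projective equality [u] = [v] of nonzero (co)vectors *)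
Definition proj_eq (m n : nat) (u v : 'M[R]_(m, n)) : Prop :=
  exists c : R, c != 0 /\ u = c *: v.

Definition on_line (b : 'rV[R]_3) (X : 'cV[R]_3) : Prop := pairing b X = 0.

Definition on_join (a1 a2 X : 'cV[R]_3) : Prop := det3 a1 a2 X = 0.

Definition inscribed (a1 a2 : 'cV[R]_3) (b1 b2 : 'rV[R]_3) : Prop :=
  ~ proj_eq a1 a2 /\ ~ proj_eq b1 b2 /\
  forall X : 'cV[R]_3, X != 0 -> on_line b1 X -> on_line b2 X -> on_join a1 a2 X.

End Defs.

(* Main.v *)
Require Import Defs.
From mathcomp Require Import all_boot all_order all_algebra.
From mathcomp Require Import reals ring lra.
Import GRing.Theory Num.Theory.
Local Open Scope ring_scope.
Section S.
Context {R : realType}.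
Definition i0 : 'I_3 := @Ordinal 3 0 isT.
Definition i1 : 'I_3 := @Ordinal 3 1 isT.
Definition i2 : 'I_3 := @Ordinal 3 2 isT.
Lemma det33 (M : 'M[R]_3) : \det M =
  M i0 i0 * (M i1 i1 * M i2 i2 - M i1 i2 * M i2 i1)
 - M i0 i1 * (M i1 i0 * M i2 i2 - M i1 i2 * M i2 i0)
 + M i0 i2 * (M i1 i0 * M i2 i1 - M i1 i1 * M i2 i0).
Proof.
set f := fun k l : nat => M (inord k) (inord l).
have -> : M = \matrix_(i<3,j<3) f i j.
  by apply/matrixP => i j; rewrite mxE /f !inord_val.
rewrite (expand_det_row _ ord0) !big_ord_recr big_ord0 /cofactor /=.
rewrite !(expand_det_row _ ord0) !big_ord_recr big_ord0 /cofactor /= !det_mx11 !mxE /=.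
rewrite !big_ord0 /bump /= !expr0 !expr1 /=; ring.
Qed.
Lemma cVi (A : 'cV[R]_3) : A = \matrix_(i<3,j<1) A (inord i) ord0.
Proof. by apply/matrixP => i j; rewrite mxE inord_val (ord1 j). Qed.
Lemma rVi (A : 'rV[R]_3) : A = \matrix_(i<1,j<3) A ord0 (inord j).
Proof. by apply/matrixP => i j; rewrite mxE inord_val (ord1 i). Qed.
Lemma pairingE (b : 'rV[R]_3) (A : 'cV[R]_3) : pairing b A = b ord0 i0 * A i0 ord0 + b ord0 i1 * A i1 ord0 + b ord0 i2 * A i2 ord0.
Proof.
rewrite /pairing mxE !big_ord_recr big_ord0 /= add0r.
rewrite [b]rVi [A]cVi !mxE /=. by [].
Qed.
Lemma det3E (u v w : 'cV[R]_3) : det3 u v w =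
  u i0 ord0 * (v i1 ord0 * w i2 ord0 - w i1 ord0 * v i2 ord0)
 - v i0 ord0 * (u i1 ord0 * w i2 ord0 - w i1 ord0 * u i2 ord0)
 + w i0 ord0 * (u i1 ord0 * v i2 ord0 - v i1 ord0 * u i2 ord0).
Proof. rewrite /det3 det33 !mxE /=. ring. Qed.
Lemma crossE (u v : 'cV[R]_3) (j : 'I_3) : cross u v ord0 j = det3 u v (@evec R j).
Proof. by rewrite mxE. Qed.
Lemma evecE (i j : 'I_3) : @evec R j i ord0 = (i == j)%:R.
Proof. by rewrite mxE. Qed.
Lemma cross0E (u v : 'cV[R]_3) : cross u v ord0 i0 = u i1 ord0 * v i2 ord0 - u i2 ord0 * v i1 ord0.
Proof. rewrite crossE det3E !evecE /=. ring. Qed.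
Lemma cross1E (u v : 'cV[R]_3) : cross u v ord0 i1 = u i2 ord0 * v i0 ord0 - u i0 ord0 * v i2 ord0.
Proof. rewrite crossE det3E !evecE /=. ring. Qed.
Lemma cross2E (u v : 'cV[R]_3) : cross u v ord0 i2 = u i0 ord0 * v i1 ord0 - u i1 ord0 * v i0 ord0.
Proof. rewrite crossE det3E !evecE /=. ring. Qed.

Lemma ord3_cases (P : 'I_3 -> Prop) : P i0 -> P i1 -> P i2 -> forall j, P j.
Proof.
move=> p0 p1 p2 [[|[|[|//]]] Hj].
- by have -> : Ordinal Hj = i0 by apply: val_inj.
- by have -> : Ordinal Hj = i1 by apply: val_inj.
- by have -> : Ordinal Hj = i2 by apply: val_inj.
Qed.
Lemma rV3_eq (u v : 'rV[R]_3) : u ord0 i0 = v ord0 i0 -> u ord0 i1 = v ord0 i1 ->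
  u ord0 i2 = v ord0 i2 -> u = v.
Proof. move=> *; apply/matrixP => i j; rewrite (ord1 i); move: j; exact: ord3_cases. Qed.
Lemma cV3_eq (u v : 'cV[R]_3) : u i0 ord0 = v i0 ord0 -> u i1 ord0 = v i1 ord0 ->
  u i2 ord0 = v i2 ord0 -> u = v.
Proof. move=> *; apply/matrixP => i j; rewrite (ord1 j); move: i; exact: ord3_cases. Qed.

Ltac crd := rewrite ?pairingE ?det3E;
  repeat (rewrite ?cross0E ?cross1E ?cross2E ?det3E ?evecE !mxE /=);
  rewrite ?cross0E ?cross1E ?cross2E ?det3E ?evecE /=.

Lemma lc1 (t e1 e2 x : R) : e1 = 1 -> e2 = 1 -> x - 1 = (1-t)*(e1-1) + t*(e2-1) -> x = 1.
Proof. move=> -> -> h; apply/eqP; rewrite -subr_eq0 h; apply/eqP; ring. Qed.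
Lemma lc2 (e1 e2 x : R) : e1 = 1 -> e2 = 1 -> x = (e2 - 1) - (e1 - 1) -> x = 0.
Proof. move=> -> -> ->; ring. Qed.

Lemma horiz_to (A1 A2 : 'cV[R]_3) (b1 b2 : 'rV[R]_3) :
  horizontal_line A1 b1 A2 b2 -> b2 = b1 + cross A1 A2.
Proof.
move=> hH; have [_ [_ hD]] := hH 0; move/matrixP: hD => hD.
apply: rV3_eq; [move: (hD ord0 i0)|move: (hD ord0 i1)|move: (hD ord0 i2)]; crd => h;
  [rewrite -[b2 ord0 i0](subrK (b1 ord0 i0)) h|rewrite -[b2 ord0 i1](subrK (b1 ord0 i1)) h|
   rewrite -[b2 ord0 i2](subrK (b1 ord0 i2)) h]; ring.
Qed.

Lemma horiz_of (A1 A2 : 'cV[R]_3) (b1 : 'rV[R]_3) :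
  inQ A1 b1 -> inQ A2 (b1 + cross A1 A2) -> horizontal_line A1 b1 A2 (b1 + cross A1 A2).
Proof.
rewrite /inQ => h1 h2 t; rewrite /inQ /inD; split; [|split].
- by apply: (lc1 t _ _ _ h1 h2); crd; ring.
- by apply: (lc2 _ _ _ h1 h2); crd; ring.
- by apply: rV3_eq; crd; ring.
Qed.

Lemma pairingDl (b c : 'rV[R]_3) (A : 'cV[R]_3) : pairing (b + c) A = pairing b A + pairing c A.
Proof. crd; ring. Qed.
Lemma pairingBl (b c : 'rV[R]_3) (A : 'cV[R]_3) : pairing (b - c) A = pairing b A - pairing c A.
Proof. crd; ring. Qed.
Lemma pairingZl k (b : 'rV[R]_3) (A : 'cV[R]_3) : pairing (k *: b) A = k * pairing b A.
Proof. crd; ring. Qed.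
Lemma pairingZr k (b : 'rV[R]_3) (A : 'cV[R]_3) : pairing b (k *: A) = k * pairing b A.
Proof. crd; ring. Qed.
Lemma pairing0r (b : 'rV[R]_3) : pairing b 0 = 0.
Proof. crd; ring. Qed.
Lemma pairing_cross (u v w : 'cV[R]_3) : pairing (cross u v) w = det3 u v w.
Proof. crd; ring. Qed.
Lemma det3_uvu (u v : 'cV[R]_3) : det3 u v u = 0.
Proof. crd; ring. Qed.
Lemma det3_uvv (u v : 'cV[R]_3) : det3 u v v = 0.
Proof. crd; ring. Qed.
Lemma crossZl k (u v : 'cV[R]_3) : cross (k *: u) v = k *: cross u v.
Proof. apply: rV3_eq; crd; ring. Qed.
Lemma crossZr k (u v : 'cV[R]_3) : cross u (k *: v) = k *: cross u v.
Proof. apply: rV3_eq; crd; ring. Qed.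
Lemma cross_self (u : 'cV[R]_3) : cross u u = 0.
Proof. apply: rV3_eq; crd; ring. Qed.

Lemma solve1 (a b x y : R) : y != 0 -> a * y = x * b -> a = x / y * b.
Proof. by move=> hy h; rewrite mulrAC -h mulfK. Qed.

Lemma dep3 (f g : 'I_3 -> R) :
  f i1 * g i2 - f i2 * g i1 = 0 -> f i2 * g i0 - f i0 * g i2 = 0 ->
  f i0 * g i1 - f i1 * g i0 = 0 -> g i0 != 0 \/ g i1 != 0 \/ g i2 != 0 ->
  exists c, forall j, f j = c * g j.
Proof.
move=> e0 e1 e2 [h|[h|h]]; [exists (f i0 / g i0)|exists (f i1 / g i1)|exists (f i2 / g i2)];
  apply: ord3_cases; apply: solve1 => //; lra.
Qed.

Lemma cV3_nz (u : 'cV[R]_3) : u != 0 -> u i0 ord0 != 0 \/ u i1 ord0 != 0 \/ u i2 ord0 != 0.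
Proof.
move=> hu.
have [h0|h0] := eqVneq (u i0 ord0) 0; last by left.
have [h1|h1] := eqVneq (u i1 ord0) 0; last by right; left.
have [h2|h2] := eqVneq (u i2 ord0) 0; last by right; right.
by case/negP: hu; apply/eqP; apply: cV3_eq; rewrite mxE.
Qed.
Lemma rV3_nz (u : 'rV[R]_3) : u != 0 -> u ord0 i0 != 0 \/ u ord0 i1 != 0 \/ u ord0 i2 != 0.
Proof.
move=> hu.
have [h0|h0] := eqVneq (u ord0 i0) 0; last by left.
have [h1|h1] := eqVneq (u ord0 i1) 0; last by right; left.
have [h2|h2] := eqVneq (u ord0 i2) 0; last by right; right.
by case/negP: hu; apply/eqP; apply: rV3_eq; rewrite mxE.
Qed.

Lemma cross0_proj (u v : 'cV[R]_3) : cross u v = 0 -> u != 0 -> v != 0 -> proj_eq u v.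
Proof.
move=> h hu hv.
have e (j : 'I_3) := congr1 (fun M : 'rV[R]_3 => M ord0 j) h.
move: (e i0) (e i1) (e i2); crd => e0 e1 e2.
have [c hc] := @dep3 (fun j => u j ord0) (fun j => v j ord0) e0 e1 e2 (cV3_nz v hv).
have hc' : forall j, u j ord0 = c * v j ord0 := hc.
have huc : u = c *: v by apply: cV3_eq; rewrite mxE hc'.
exists c; split => //.
apply/eqP => c0; case/negP: hu; apply/eqP; by rewrite huc c0 scale0r.
Qed.

Definition rc (u v : 'rV[R]_3) : 'cV[R]_3 := \col_i (cross u^T v^T) ord0 i.

Lemma rc_perp1 (u v : 'rV[R]_3) : pairing u (rc u v) = 0.
Proof. crd; ring. Qed.
Lemma rc_perp2 (u v : 'rV[R]_3) : pairing v (rc u v) = 0.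
Proof. crd; ring. Qed.

Lemma rc0_proj (u v : 'rV[R]_3) : rc u v = 0 -> u != 0 -> v != 0 -> proj_eq u v.
Proof.
move=> h hu hv.
have e (j : 'I_3) := congr1 (fun M : 'cV[R]_3 => M j ord0) h.
move: (e i0) (e i1) (e i2); crd => e0 e1 e2.
have [c hc'] : exists c, forall j, u ord0 j = c * v ord0 j.
  apply: (@dep3 (fun j => u ord0 j) (fun j => v ord0 j)) => /=;
   [rewrite -e0; ring|rewrite -e1; ring|rewrite -e2; ring|exact: rV3_nz].
have huc : u = c *: v by apply: rV3_eq; rewrite mxE hc'.
exists c; split => //.
apply/eqP => c0; case/negP: hu; apply/eqP; by rewrite huc c0 scale0r.
Qed.
Lemma gram_s (w0 w1 w2 u0 u1 u2 v0 v1 v2 : R) :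
  w0 * (u1*v2 - u2*v1) + w1 * (u2*v0 - u0*v2) + w2 * (u0*v1 - u1*v0) = 0 ->
  (u1*v2 - u2*v1) != 0 \/ (u2*v0 - u0*v2) != 0 \/ (u0*v1 - u1*v0) != 0 ->
  exists a b, [/\ w0 = a*v0 - b*u0, w1 = a*v1 - b*u1 & w2 = a*v2 - b*u2].
Proof.
move=> hw hX.
pose G := (u1*v2 - u2*v1)^+2 + (u2*v0 - u0*v2)^+2 + (u0*v1 - u1*v0)^+2.
have hG : G != 0.
  apply: lt0r_neq0.
  have s0 := sqr_ge0 (u1*v2 - u2*v1); have s1 := sqr_ge0 (u2*v0 - u0*v2);
  have s2 := sqr_ge0 (u0*v1 - u1*v0).
  case: hX => [h|[h|h]].
  - have := @exprn_even_gt0 R 2 (u1*v2 - u2*v1) isT; rewrite h orbT => ?; rewrite /G; lra.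
  - have := @exprn_even_gt0 R 2 (u2*v0 - u0*v2) isT; rewrite h orbT => ?; rewrite /G; lra.
  - have := @exprn_even_gt0 R 2 (u0*v1 - u1*v0) isT; rewrite h orbT => ?; rewrite /G; lra.
pose wu := w0*u0 + w1*u1 + w2*u2. pose wv := w0*v0 + w1*v1 + w2*v2.
pose uu := u0*u0 + u1*u1 + u2*u2. pose vv := v0*v0 + v1*v1 + v2*v2.
pose uv := u0*v0 + u1*v1 + u2*v2.
pose A := wv * uu - wu * uv. pose B := wv * uv - wu * vv.
pose wX := w0 * (u1*v2 - u2*v1) + w1 * (u2*v0 - u0*v2) + w2 * (u0*v1 - u1*v0).
have hwX : wX = 0 by [].
exists (A / G), (B / G); split.
- rewrite -[w0](mulKf hG).
  have -> : G * w0 = wX * (u1*v2 - u2*v1) + A * v0 - B * u0 by rewrite /G /wX /A /B /wu /wv /uu /vv /uv; ring.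
  rewrite hwX mul0r add0r; field; exact: hG.
- rewrite -[w1](mulKf hG).
  have -> : G * w1 = wX * (u2*v0 - u0*v2) + A * v1 - B * u1 by rewrite /G /wX /A /B /wu /wv /uu /vv /uv; ring.
  rewrite hwX mul0r add0r; field; exact: hG.
- rewrite -[w2](mulKf hG).
  have -> : G * w2 = wX * (u0*v1 - u1*v0) + A * v2 - B * u2 by rewrite /G /wX /A /B /wu /wv /uu /vv /uv; ring.
  rewrite hwX mul0r add0r; field; exact: hG.
Qed.
Lemma rc0E (u v : 'rV[R]_3) : rc u v i0 ord0 = u ord0 i1 * v ord0 i2 - u ord0 i2 * v ord0 i1.
Proof. crd; ring. Qed.
Lemma rc1E (u v : 'rV[R]_3) : rc u v i1 ord0 = u ord0 i2 * v ord0 i0 - u ord0 i0 * v ord0 i2.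
Proof. crd; ring. Qed.
Lemma rc2E (u v : 'rV[R]_3) : rc u v i2 ord0 = u ord0 i0 * v ord0 i1 - u ord0 i1 * v ord0 i0.
Proof. crd; ring. Qed.

Lemma gram (w u v : 'rV[R]_3) : pairing w (rc u v) = 0 -> rc u v != 0 ->
  exists a b : R, w = a *: v - b *: u.
Proof.
move=> hw hX; have := cV3_nz _ hX; move: hw; rewrite pairingE !rc0E !rc1E !rc2E => hw hX'.
have [a [b [e0 e1 e2]]] := gram_s _ _ _ _ _ _ _ _ _ hw hX'.
by exists a, b; apply: rV3_eq; rewrite !mxE.
Qed.

Lemma cube_root (x : R) : exists c, c ^+ 3 = x.
Proof.
have h1 : 1 <= 1 + x^+2 by have := sqr_ge0 x; lra.
have h2 : 1 + x^+2 <= (1 + x^+2)^+3 by nra.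
have h3 : x <= 1 + x^+2 by nra.
have h4 : - x <= 1 + x^+2 by nra.
have hab : -(1 + x^+2) <= 1 + x^+2 by lra.
have hp : ('X^3 - x%:P).[-(1 + x^+2)] <= 0 <= ('X^3 - x%:P).[1 + x^+2].
  rewrite !hornerE; apply/andP; split; nra.
have [c _ hc] := poly_ivt hab hp.
by exists c; move: hc; rewrite /root !hornerE subr_eq0 => /eqP.
Qed.

Lemma cube_inj (x y : R) : x ^+ 3 = y ^+ 3 -> x = y.
Proof.
move=> h.
have : (x - y) * (x^+2 + x*y + y^+2) = 0.
  have -> : (x - y) * (x^+2 + x*y + y^+2) = x^+3 - y^+3 by ring.
  by rewrite h subrr.
move/eqP; rewrite mulf_eq0 => /orP[/eqP/subr0_eq //|/eqP hq].
have hy : y ^+ 2 <= 0 by nra.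
have y0 : y = 0 by apply/eqP; rewrite -sqrf_eq0; apply/eqP; have := sqr_ge0 y; lra.
rewrite y0; move: hq; rewrite y0 expr0n /= mulr0 !addr0 => /eqP; by rewrite sqrf_eq0 => /eqP.
Qed.

Lemma indep m n (u v : 'M[R]_(m, n)) : ~ proj_eq u v -> u != 0 -> v != 0 ->
  forall x y : R, x *: u = y *: v -> x = 0 /\ y = 0.
Proof.
move=> np hu hv x y e.
have [x0|x0] := eqVneq x 0.
  split => //; move: e; rewrite x0 scale0r => /esym/eqP.
  by rewrite scaler_eq0 (negbTE hv) orbF => /eqP.
exfalso; apply: np; exists (x^-1 * y); split.
  rewrite mulf_eq0 invr_eq0 (negbTE x0) /=; apply/eqP => y0.
  by move: e; rewrite y0 scale0r => /eqP; rewrite scaler_eq0 (negbTE x0) (negbTE hu).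
by rewrite -[u](scalerK x0) e scalerA.
Qed.

Lemma zid (V : zmodType) (b P Q : V) : b - Q = (b + (P - Q)) - P.
Proof. by rewrite addrCA [P + _]addrC addrK. Qed.

Lemma solve_inv (a x : R) : a * x = 1 -> x = a^-1.
Proof.
move=> h; have a0 : a != 0 by apply/eqP => a0; move: h; rewrite a0 mul0r => /eqP; rewrite eq_sym oner_eq0.
by rewrite -[x]mul1r -(mulVf a0) -mulrA h mulr1.
Qed.
End S.

Theorem lemma1 (R : realType) :
  (forall (A1 A2 : 'cV[R]_3) (b1 b2 : 'rV[R]_3),
      inQ A1 b1 -> inQ A2 b2 -> (A1, b1) <> (A2, b2) ->
      horizontal_line A1 b1 A2 b2 ->
      inscribed A1 A2 b1 b2) /\
  (forall (a1 a2 : 'cV[R]_3) (be1 be2 : 'rV[R]_3),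
      a1 != 0 -> a2 != 0 -> be1 != 0 -> be2 != 0 ->
      inscribed a1 a2 be1 be2 ->
      ~ on_line be1 a1 -> ~ on_line be2 a2 ->
      exists! q : 'cV[R]_3 * 'rV[R]_3 * 'cV[R]_3 * 'rV[R]_3,
        let: (A1, b1, A2, b2) := q in
        [/\ inQ A1 b1, inQ A2 b2,
            proj_eq A1 a1 /\ proj_eq A2 a2,
            proj_eq b1 be1 /\ proj_eq b2 be2
          & (A1, b1) <> (A2, b2) /\ horizontal_line A1 b1 A2 b2]).
Proof.
split.
  move=> A1 A2 b1 b2 h1 h2 hne hH.
  have hb := horiz_to _ _ _ _ hH; subst b2.
  have nzA (A : 'cV[R]_3) (b : 'rV[R]_3) : inQ A b -> A != 0.
    move=> h; apply/eqP => e; move: h; rewrite /inQ e pairing0r => /eqP.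
    by rewrite eq_sym oner_eq0.
  have hA2 : pairing b1 A2 = 1.
    by move: h2; rewrite /inQ pairingDl pairing_cross det3_uvv addr0.
  have na : ~ proj_eq A1 A2.
    move=> [c [c0 e]]; subst A1.
    move: h1; rewrite /inQ pairingZr hA2 mulr1 => c1; subst c.
    by apply: hne; rewrite scale1r cross_self addr0.
  split; [exact: na|split].
  - move=> [c [c0 e]].
    have hc : c = 1.
      have := congr1 (fun b : 'rV[R]_3 => pairing b A2) e; rewrite /= pairingZl hA2.
      by move: h2; rewrite /inQ => ->; rewrite mulr1.
    subst c; rewrite scale1r in e.
    have hn : cross A1 A2 = 0 by apply: (addrI b1); rewrite addr0 -e.
    by apply: na; apply: cross0_proj => //; [exact: (nzA _ _ h1)|exact: (nzA _ _ h2)].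
  - move=> X Xnz o1 o2; rewrite /on_join -pairing_cross.
    by move: o2; rewrite /on_line pairingDl o1 add0r.
move=> a1 a2 be1 be2 ha1 ha2 hb1 hb2 [npa [npb hX]] n1 n2.
have hk1 : pairing be1 a1 != 0 by apply/eqP.
have hk2 : pairing be2 a2 != 0 by apply/eqP.
have [k1 ek1] : exists k, pairing be1 a1 = k by eexists.
have [k2 ek2] : exists k, pairing be2 a2 = k by eexists.
rewrite ek1 in hk1; rewrite ek2 in hk2.
have Xnz : rc be1 be2 != 0.
  by apply/eqP => e; apply: npb; apply: rc0_proj.
have hnX : pairing (cross a1 a2) (rc be1 be2) = 0.
  by rewrite pairing_cross; apply: hX; [exact: Xnz|exact: rc_perp1|exact: rc_perp2].
have [al [be hn]] := gram _ _ _ hnX Xnz.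
have na1 : pairing (cross a1 a2) a1 = 0 by rewrite pairing_cross det3_uvu.
have na2 : pairing (cross a1 a2) a2 = 0 by rewrite pairing_cross det3_uvv.
have nnz : cross a1 a2 != 0 by apply/eqP => e; apply: npa; apply: cross0_proj.
have al0 : al != 0.
  apply/eqP => al0; move: na1; rewrite hn pairingBl !pairingZl al0 mul0r sub0r ek1.
  move/eqP; rewrite oppr_eq0 mulf_eq0 (negbTE hk1) orbF => /eqP be0.
  by move/eqP: nnz; apply; rewrite hn al0 be0 !scale0r subr0.
have be0 : be != 0.
  apply/eqP => be0; move: na2; rewrite hn pairingBl !pairingZl be0 mul0r subr0 ek2.
  move/eqP; rewrite mulf_eq0 (negbTE hk2) orbF => /eqP al0'.
  by move/eqP: nnz; apply; rewrite hn al0' be0 !scale0r subr0.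
have D0 : al * be * k1 * k2 != 0 by rewrite !mulf_neq0.
have [c hc] := cube_root ((al * be * k1 * k2)^-1).
have hc3 : c ^+ 3 * (al * be * k1 * k2) = 1 by rewrite hc mulVf.
have c0 : c != 0.
  by apply/eqP => c0; move: hc3; rewrite c0 expr0n /= mul0r => /eqP; rewrite eq_sym oner_eq0.
have s10 : (be * k1 * c)^-1 != 0 by rewrite invr_eq0 !mulf_neq0.
have s20 : (al * k2 * c)^-1 != 0 by rewrite invr_eq0 !mulf_neq0.
have hs : (be * k1 * c)^-1 * (al * k2 * c)^-1 = c.
  have e : (be * k1 * c)^-1 * (al * k2 * c)^-1 * (c ^+ 3 * (al * be * k1 * k2)) = c.
    by field; rewrite ?c0 ?hk1 ?hk2 ?al0 ?be0.
  by rewrite hc3 mulr1 in e.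
exists ((be * k1 * c)^-1 *: a1, (c * be) *: be1, (al * k2 * c)^-1 *: a2, (c * al) *: be2).
split.
  have E : (c * al) *: be2 = (c * be) *: be1 + cross ((be * k1 * c)^-1 *: a1) ((al * k2 * c)^-1 *: a2).
    rewrite crossZl crossZr scalerA hs hn scalerBr !scalerA.
    by rewrite addrC subrK.
  split.
  - by rewrite /inQ pairingZl pairingZr ek1; field; rewrite ?c0 ?hk1 ?hk2 ?al0 ?be0.
  - by rewrite /inQ pairingZl pairingZr ek2; field; rewrite ?c0 ?hk1 ?hk2 ?al0 ?be0.
  - by split; [exists (be * k1 * c)^-1|exists (al * k2 * c)^-1].
  - by split; [exists (c * be)|exists (c * al)]; rewrite ?mulf_neq0.
  split.
    move=> [e _]; apply: npa; exists ((be * k1 * c) * (al * k2 * c)^-1); split.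
      by rewrite mulf_neq0 // !mulf_neq0.
    by rewrite -[a1](scalerK s10) e scalerA invrK.
  rewrite E; apply: horiz_of; rewrite -?E /inQ pairingZl pairingZr.
  - by rewrite ek1; field; rewrite ?c0 ?hk1 ?hk2 ?al0 ?be0.
  - by rewrite ek2; field; rewrite ?c0 ?hk1 ?hk2 ?al0 ?be0.
move=> [[[A1 b1] A2] b2] /= [hq1 hq2 [[x1 [x10 eA1]] [x2 [x20 eA2]]]
   [[y1 [y10 eb1]] [y2 [y20 eb2]]] [hne hH]].
subst A1 A2 b1 b2.
have hb := horiz_to _ _ _ _ hH.
rewrite crossZl crossZr scalerA hn in hb.
have := indep _ _ _ _ npb hb1 hb2 (y1 - x1 * x2 * be) (y2 - x1 * x2 * al).
case.
  by rewrite !scalerBl hb scalerBr !scalerA -zid.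
move=> /subr0_eq ey1 /subr0_eq ey2.
move: hq1 hq2; rewrite /inQ !pairingZl !pairingZr ek1 ek2 => hq1 hq2.
have hp : x1 * x2 = c.
  apply: cube_inj; apply: (mulIf D0); rewrite hc3.
  have -> : (x1 * x2)^+3 * (al * be * k1 * k2) = (y1 * (x1 * k1)) * (y2 * (x2 * k2)).
    by rewrite ey1 ey2; ring.
  by rewrite hq1 hq2 mulr1.
rewrite hp in ey1 ey2; subst y1 y2.
have ex1 : x1 = (be * k1 * c)^-1.
  by apply: solve_inv; rewrite -hq1; ring.
have ex2 : x2 = (al * k2 * c)^-1.
  by apply: solve_inv; rewrite -hq2; ring.
by rewrite ex1 ex2.
Qed.
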